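(* Let $q\ge2$ be a prime power and $n,d$ positive integers with $d<\frac{n+1}{2}$. For $0\le i\le d$ let $m_i={n\brack i}_q-{n\brack i-1}_q$ (with ${n\brack -1}_q=0$) be the multiplicities of the Grassmann scheme $Gr(n,d)$ over $\mathbb{F}_q$. Then $m_i^2\ge m_{i-1}m_{i+1}$ for all $1\le i\le d-1$.
   Context: ${n\brack i}_q=\prod_{t=0}^{i-1}\frac{q^{n-t}-1}{q^{i-t}-1}$ is the Gaussian binomial coefficient (number of $i$-dimensional subspaces of $\mathbb{F}_q^n$). The Grassmann scheme $Gr(n,d)$ is the association scheme on the $d$-dimensional subspaces of $\mathbb{F}_q^n$, with relations given by the dimension of the intersection; in the standard ($Q$-polynomial) ordering its multiplicities are $m_i={n\brack i}_q-{n\brack i-1}_q$, $0\le i\le d$. *)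

(* Defs.v *)
From mathcomp Require Import all_boot all_order all_algebra.
Set Implicit Arguments. Unset Strict Implicit. Unset Printing Implicit Defensive.
Import Order.TTheory GRing.Theory Num.Theory.
Local Open Scope ring_scope.

Definition gauss_binom (q n i : nat) : rat :=
  \prod_(t < i) (((q ^ (n - t))%:R - 1) / ((q ^ (i - t))%:R - 1)).

Definition grass_mult (q n i : nat) : rat :=
  gauss_binom q n i - (if i is j.+1 then gauss_binom q n j else 0).

Definition prime_power (q : nat) : Prop :=
  exists p k : nat, prime p /\ (0 < k)%N /\ q = (p ^ k)%N.

(* Main.v *)
Require Import Defs.
From mathcomp Require Import all_boot all_order all_algebra.
From mathcomp Require Import ring lra zify.
Import Order.TTheory GRing.Theory Num.Theory.
Local Open Scope ring_scope.

Lemma g_split q n i : gauss_binom q n i =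
  (\prod_(t < i) ((q%:R : rat) ^+ (n - t) - 1)) / (\prod_(t < i) ((q%:R : rat) ^+ t.+1 - 1)).
Proof.
rewrite /gauss_binom big_split /= prodfV; congr (_ * _^-1).
  by apply: eq_bigr => t _; rewrite natrX.
rewrite (reindex_inj rev_ord_inj) /=; apply: eq_bigr => t _.
by rewrite natrX subKn.
Qed.

Lemma g_rec q n j : gauss_binom q n j.+1 =
  gauss_binom q n j * (((q%:R : rat) ^+ (n - j) - 1) / ((q%:R : rat) ^+ j.+1 - 1)).
Proof.
rewrite !g_split !big_ord_recr /= invfM.
rewrite mulrACA.
done.
Qed.

Lemma powm1_neq0 (x : rat) k : 2 <= x -> x ^+ k.+1 - 1 != 0.
Proof.
move=> hx; rewrite subr_eq0 gt_eqF // exprn_egt1 //.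
by apply: lt_le_trans hx; rewrite ltr1n.
Qed.

Lemma mk q n k : (2 <= (q%:R : rat)) -> (k < n)%N ->
  grass_mult q n k = gauss_binom q n k *
     (1 - ((q%:R : rat) ^+ k - 1) / ((q%:R : rat) ^+ (n - k).+1 - 1)).
Proof.
move=> hx hk; case: k hk => [|j] hj.
  by rewrite /grass_mult /gauss_binom big_ord0 expr0 subrr mul0r subr0 !mulr1.
rewrite /grass_mult g_rec.
have e : ((n - j.+1).+1 = n - j)%N by rewrite subnSK // ltnW.
rewrite e.
have h1 := @powm1_neq0 _ j hx.
have h2 : (q%:R : rat) ^+ (n - j) - 1 != 0.
  by rewrite -e powm1_neq0.
field.
by rewrite h1 h2.
Qed.

Ltac pos := lazymatch goal with
 | |- is_true (0 <= _ + _) => apply: addr_ge0; [pos|pos]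
 | |- is_true (0 <= _ * _) => apply: mulr_ge0; [pos|pos]
 | |- is_true (0 <= _ ^+ _) => apply: exprn_ge0; pos
 | |- is_true (0 <= 0) => exact: lexx
 | |- _ => first [ assumption | exact: ler0n | exact: ler01 ]
 end.
Definition Spoly (y r t : rat) : rat :=
((((1*10+6)*10+3)*10+6)*10+8)+
(((6*10+6)*10+0)*10+7) * t+
((8*10+9)*10+0) * t^+2+
(4*10+0) * t^+3+
((((7*10+0)*10+1)*10+5)*10+2) * r+
((((2*10+1)*10+5)*10+0)*10+9) * r * t+
(((1*10+9)*10+8)*10+2) * r * t^+2+
(4*10+8) * r * t^+3+
(((((1*10+1)*10+2)*10+3)*10+2)*10+0) * r^+2+
((((2*10+3)*10+2)*10+0)*10+6) * r^+2 * t+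
(((1*10+0)*10+9)*10+2) * r^+2 * t^+2+
((((7*10+9)*10+6)*10+5)*10+6) * r^+3+
(((8*10+3)*10+0)*10+4) * r^+3 * t+
((((2*10+1)*10+1)*10+2)*10+0) * r^+4+
(((((1*10+3)*10+7)*10+7)*10+2)*10+0) * y+
((((4*10+4)*10+7)*10+8)*10+7) * y * t+
(((4*10+5)*10+7)*10+5) * y * t^+2+
((1*10+4)*10+0) * y * t^+3+
(((((5*10+8)*10+3)*10+6)*10+7)*10+6) * y * r+
(((((1*10+4)*10+3)*10+6)*10+3)*10+0) * y * r * t+
(((9*10+9)*10+5)*10+5) * y * r * t^+2+
((1*10+6)*10+0) * y * r * t^+3+
(((((9*10+2)*10+5)*10+0)*10+0)*10+8) * y * r^+2+
(((((1*10+5)*10+2)*10+9)*10+2)*10+3) * y * r^+2 * t+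
(((5*10+3)*10+8)*10+0) * y * r^+2 * t^+2+
(((((6*10+4)*10+9)*10+8)*10+6)*10+8) * y * r^+3+
((((5*10+4)*10+0)*10+8)*10+0) * y * r^+3 * t+
(((((1*10+7)*10+0)*10+8)*10+1)*10+6) * y * r^+4+
(((((5*10+3)*10+3)*10+2)*10+9)*10+2) * y^+2+
(((((1*10+3)*10+6)*10+7)*10+8)*10+0) * y^+2 * t+
((((1*10+0)*10+2)*10+2)*10+3) * y^+2 * t^+2+
((1*10+9)*10+8) * y^+2 * t^+3+
((((((2*10+2)*10+3)*10+7)*10+9)*10+1)*10+8) * y^+2 * r+
(((((4*10+3)*10+2)*10+8)*10+9)*10+0) * y^+2 * r * t+
((((2*10+1)*10+7)*10+9)*10+2) * y^+2 * r * t^+2+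
((2*10+1)*10+6) * y^+2 * r * t^+3+
((((((3*10+5)*10+1)*10+4)*10+5)*10+2)*10+0) * y^+2 * r^+2+
(((((4*10+5)*10+5)*10+4)*10+6)*10+2) * y^+2 * r^+2 * t+
((((1*10+1)*10+5)*10+6)*10+9) * y^+2 * r^+2 * t^+2+
((((((2*10+4)*10+4)*10+8)*10+4)*10+5)*10+4) * y^+2 * r^+3+
(((((1*10+5)*10+9)*10+3)*10+5)*10+2) * y^+2 * r^+3 * t+
(((((6*10+3)*10+8)*10+5)*10+6)*10+0) * y^+2 * r^+4+
((((((1*10+2)*10+6)*10+1)*10+8)*10+9)*10+0) * y^+3+
(((((2*10+4)*10+9)*10+1)*10+8)*10+5) * y^+3 * t+
((((1*10+3)*10+0)*10+5)*10+7) * y^+3 * t^+2+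
((1*10+4)*10+5) * y^+3 * t^+3+
((((((5*10+2)*10+4)*10+9)*10+9)*10+7)*10+3) * y^+3 * r+
(((((7*10+7)*10+9)*10+6)*10+8)*10+2) * y^+3 * r * t+
((((2*10+7)*10+3)*10+4)*10+5) * y^+3 * r * t^+2+
((1*10+5)*10+2) * y^+3 * r * t^+3+
((((((8*10+1)*10+7)*10+9)*10+0)*10+6)*10+0) * y^+3 * r^+2+
(((((8*10+1)*10+1)*10+8)*10+1)*10+7) * y^+3 * r^+2 * t+
((((1*10+4)*10+2)*10+8)*10+8) * y^+3 * r^+2 * t^+2+
((((((5*10+6)*10+5)*10+5)*10+7)*10+6)*10+1) * y^+3 * r^+3+
(((((2*10+8)*10+1)*10+3)*10+2)*10+0) * y^+3 * r^+3 * t+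
((((((1*10+4)*10+6)*10+4)*10+7)*10+8)*10+4) * y^+3 * r^+4+
((((((2*10+0)*10+4)*10+2)*10+6)*10+6)*10+2) * y^+4+
(((((3*10+0)*10+2)*10+0)*10+6)*10+1) * y^+4 * t+
((((1*10+0)*10+5)*10+2)*10+7) * y^+4 * t^+2+
(5*10+8) * y^+4 * t^+3+
((((((8*10+4)*10+3)*10+5)*10+3)*10+1)*10+8) * y^+4 * r+
(((((9*10+3)*10+5)*10+9)*10+7)*10+6) * y^+4 * r * t+
((((2*10+1)*10+7)*10+2)*10+3) * y^+4 * r * t^+2+
(5*10+9) * y^+4 * r * t^+3+
(((((((1*10+3)*10+0)*10+5)*10+0)*10+2)*10+4)*10+2) * y^+4 * r^+2+
(((((9*10+6)*10+5)*10+7)*10+7)*10+0) * y^+4 * r^+2 * t+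
((((1*10+1)*10+1)*10+9)*10+6) * y^+4 * r^+2 * t^+2+
((((((8*10+9)*10+6)*10+5)*10+1)*10+7)*10+8) * y^+4 * r^+3+
(((((3*10+3)*10+1)*10+8)*10+5)*10+5) * y^+4 * r^+3 * t+
((((((2*10+3)*10+0)*10+7)*10+5)*10+9)*10+2) * y^+4 * r^+4+
((((((2*10+3)*10+9)*10+8)*10+6)*10+6)*10+6) * y^+5+
(((((2*10+5)*10+7)*10+0)*10+6)*10+9) * y^+5 * t+
(((5*10+5)*10+6)*10+7) * y^+5 * t^+2+
(1*10+2) * y^+5 * t^+3+
((((((9*10+8)*10+4)*10+2)*10+5)*10+2)*10+0) * y^+5 * r+
(((((7*10+9)*10+0)*10+0)*10+5)*10+6) * y^+5 * r * t+
((((1*10+1)*10+3)*10+5)*10+1) * y^+5 * r * t^+2+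
(1*10+2) * y^+5 * r * t^+3+
(((((((1*10+5)*10+1)*10+3)*10+5)*10+6)*10+4)*10+6) * y^+5 * r^+2+
(((((8*10+0)*10+8)*10+9)*10+0)*10+5) * y^+5 * r^+2 * t+
(((5*10+7)*10+8)*10+4) * y^+5 * r^+2 * t^+2+
(((((((1*10+0)*10+3)*10+3)*10+8)*10+3)*10+9)*10+6) * y^+5 * r^+3+
(((((2*10+7)*10+5)*10+9)*10+1)*10+8) * y^+5 * r^+3 * t+
((((((2*10+6)*10+4)*10+6)*10+6)*10+0)*10+4) * y^+5 * r^+4+
((((((2*10+1)*10+1)*10+3)*10+1)*10+8)*10+5) * y^+6+
(((((1*10+5)*10+7)*10+7)*10+2)*10+7) * y^+6 * t+
(((1*10+9)*10+3)*10+4) * y^+6 * t^+2+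
1 * y^+6 * t^+3+
((((((8*10+6)*10+2)*10+4)*10+0)*10+8)*10+7) * y^+6 * r+
(((((4*10+8)*10+1)*10+4)*10+3)*10+9) * y^+6 * r * t+
(((3*10+9)*10+0)*10+7) * y^+6 * r * t^+2+
1 * y^+6 * r * t^+3+
(((((((1*10+3)*10+1)*10+9)*10+3)*10+1)*10+6)*10+5) * y^+6 * r^+2+
(((((4*10+8)*10+9)*10+6)*10+9)*10+7) * y^+6 * r^+2 * t+
(((1*10+9)*10+7)*10+3) * y^+6 * r^+2 * t^+2+
((((((8*10+9)*10+6)*10+6)*10+8)*10+0)*10+9) * y^+6 * r^+3+
(((((1*10+6)*10+5)*10+9)*10+8)*10+5) * y^+6 * r^+3 * t+
((((((2*10+2)*10+8)*10+4)*10+5)*10+4)*10+6) * y^+6 * r^+4+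
((((((1*10+4)*10+2)*10+3)*10+6)*10+8)*10+0) * y^+7+
((((7*10+0)*10+3)*10+8)*10+6) * y^+7 * t+
((4*10+2)*10+6) * y^+7 * t^+2+
((((((5*10+7)*10+8)*10+3)*10+3)*10+9)*10+0) * y^+7 * r+
(((((2*10+1)*10+3)*10+6)*10+3)*10+6) * y^+7 * r * t+
((8*10+5)*10+5) * y^+7 * r * t^+2+
((((((8*10+8)*10+0)*10+8)*10+0)*10+9)*10+1) * y^+7 * r^+2+
(((((2*10+1)*10+6)*10+1)*10+1)*10+4) * y^+7 * r^+2 * t+
((4*10+2)*10+9) * y^+7 * r^+2 * t^+2+
((((((5*10+9)*10+6)*10+0)*10+7)*10+3)*10+2) * y^+7 * r^+3+
((((7*10+2)*10+8)*10+6)*10+4) * y^+7 * r^+3 * t+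
((((((1*10+5)*10+1)*10+2)*10+3)*10+5)*10+1) * y^+7 * r^+4+
(((((7*10+4)*10+0)*10+2)*10+0)*10+8) * y^+8+
((((2*10+2)*10+6)*10+9)*10+6) * y^+8 * t+
(5*10+4) * y^+8 * t^+2+
((((((2*10+9)*10+9)*10+5)*10+2)*10+1)*10+9) * y^+8 * r+
((((6*10+8)*10+5)*10+7)*10+6) * y^+8 * r * t+
((1*10+0)*10+8) * y^+8 * r * t^+2+
((((((4*10+5)*10+4)*10+4)*10+4)*10+0)*10+9) * y^+8 * r^+2+
((((6*10+9)*10+0)*10+6)*10+4) * y^+8 * r^+2 * t+
(5*10+4) * y^+8 * r^+2 * t^+2+
((((((3*10+0)*10+6)*10+3)*10+9)*10+9)*10+3) * y^+8 * r^+3+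
((((2*10+3)*10+1)*10+8)*10+4) * y^+8 * r^+3 * t+
(((((7*10+7)*10+4)*10+5)*10+9)*10+5) * y^+8 * r^+4+
(((((2*10+9)*10+7)*10+2)*10+4)*10+2) * y^+9+
(((5*10+1)*10+6)*10+1) * y^+9 * t+
3 * y^+9 * t^+2+
((((((1*10+1)*10+9)*10+8)*10+8)*10+4)*10+7) * y^+9 * r+
((((1*10+5)*10+5)*10+4)*10+0) * y^+9 * r * t+
6 * y^+9 * r * t^+2+
((((((1*10+8)*10+1)*10+3)*10+0)*10+8)*10+9) * y^+9 * r^+2+
((((1*10+5)*10+5)*10+9)*10+7) * y^+9 * r^+2 * t+
3 * y^+9 * r^+2 * t^+2+
((((((1*10+2)*10+1)*10+8)*10+6)*10+0)*10+5) * y^+9 * r^+3+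
(((5*10+2)*10+1)*10+8) * y^+9 * r^+3 * t+
(((((3*10+0)*10+7)*10+1)*10+2)*10+1) * y^+9 * r^+4+
((((9*10+1)*10+4)*10+9)*10+9) * y^+10+
((7*10+8)*10+6) * y^+10 * t+
(((((3*10+6)*10+8)*10+0)*10+4)*10+1) * y^+10 * r+
(((2*10+3)*10+6)*10+1) * y^+10 * r * t+
(((((5*10+5)*10+5)*10+1)*10+2)*10+9) * y^+10 * r^+2+
(((2*10+3)*10+6)*10+4) * y^+10 * r^+2 * t+
(((((3*10+7)*10+2)*10+1)*10+3)*10+1) * y^+10 * r^+3+
((7*10+8)*10+9) * y^+10 * r^+3 * t+
((((9*10+3)*10+5)*10+4)*10+4) * y^+10 * r^+4+
((((2*10+1)*10+2)*10+1)*10+5) * y^+11+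
(7*10+2) * y^+11 * t+
((((8*10+5)*10+1)*10+4)*10+9) * y^+11 * r+
((2*10+1)*10+6) * y^+11 * r * t+
(((((1*10+2)*10+8)*10+1)*10+5)*10+7) * y^+11 * r^+2+
((2*10+1)*10+6) * y^+11 * r^+2 * t+
((((8*10+5)*10+7)*10+2)*10+7) * y^+11 * r^+3+
(7*10+2) * y^+11 * r^+3 * t+
((((2*10+1)*10+5)*10+0)*10+4) * y^+11 * r^+4+
(((3*10+5)*10+8)*10+8) * y^+12+
3 * y^+12 * t+
((((1*10+4)*10+3)*10+7)*10+7) * y^+12 * r+
9 * y^+12 * r * t+
((((2*10+1)*10+6)*10+0)*10+3) * y^+12 * r^+2+
9 * y^+12 * r^+2 * t+
((((1*10+4)*10+4)*10+2)*10+7) * y^+12 * r^+3+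
3 * y^+12 * r^+3 * t+
(((3*10+6)*10+1)*10+3) * y^+12 * r^+4+
((4*10+1)*10+8) * y^+13+
(((1*10+6)*10+7)*10+3) * y^+13 * r+
(((2*10+5)*10+1)*10+1) * y^+13 * r^+2+
(((1*10+6)*10+7)*10+5) * y^+13 * r^+3+
((4*10+1)*10+9) * y^+13 * r^+4+
(3*10+0) * y^+14+
((1*10+2)*10+0) * y^+14 * r+
((1*10+8)*10+0) * y^+14 * r^+2+
((1*10+2)*10+0) * y^+14 * r^+3+
(3*10+0) * y^+14 * r^+4+
1 * y^+15+
4 * y^+15 * r+
6 * y^+15 * r^+2+
4 * y^+15 * r^+3+
1 * y^+15 * r^+4
.
Lemma Spoly_ge0 y r t : 0 <= y -> 0 <= r -> 0 <= t -> 0 <= Spoly y r t.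
Proof.
move=> hy hr ht; rewrite /Spoly.
Time pos.
Qed.
Lemma core (x u w : rat) : 2 <= x -> 1 <= u -> x^+3 * u <= w ->
  0 <= x^+2*(w-u)^+2*(x^+2*w-1)*(x^+2*u-1) - (x^+2*w-u)*(x*w-1)*(w-x^+2*u)*(x*u-1).
Proof.
move=> hx hu hw.
have -> : x^+2*(w-u)^+2*(x^+2*w-1)*(x^+2*u-1) - (x^+2*w-u)*(x*w-1)*(w-x^+2*u)*(x*u-1)
  = Spoly (x-2) (u-1) (w - x^+3*u).
  rewrite /Spoly. Time ring.
apply: Spoly_ge0; by rewrite subr_ge0.
Qed.

Theorem theorem6 (q n d : nat) :
  prime_power q -> (0 < n)%N -> (0 < d)%N -> (d.*2 < n.+1)%N ->
  forall i : nat, (1 <= i)%N -> (i <= d.-1)%N ->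
    grass_mult q n i.-1 * grass_mult q n i.+1 <= grass_mult q n i ^+ 2.
Proof.
move=> [p [e [pp [he ->]]]] hn hd hdn [//|k] _ hi /=.
set x := ((p ^ e)%N%:R : rat).
have hx : 2 <= x.
  rewrite /x ler_nat; apply: leq_trans (prime_gt1 pp) _.
  by rewrite -{1}(expn1 p) leq_pexp2l // prime_gt0.
have hkn : (2 * k + 4 <= n)%N.
  move: hdn hi; rewrite -addnn; lia.
rewrite (@mk (p ^ e)%N n k hx); last by lia.
rewrite /grass_mult !g_rec.
set G := gauss_binom _ n k.
set m := (n - k.+1)%N.
have e1 : (n - k = m.+1)%N by rewrite /m; lia.
rewrite e1.
have hm : (m = 3 + k + (m - (k + 3)))%N by lia.
set u := x ^+ k.
set w := x ^+ m.
have hu : 1 <= u by rewrite /u exprn_ege1 // (le_trans _ hx).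
have hw : x ^+ 3 * u <= w.
  rewrite /w hm !exprD -[X in X <= _]mulr1 ler_wpM2l //.
    by rewrite mulr_ge0 ?exprn_ge0 // (le_trans _ hx).
  by rewrite exprn_ege1 // (le_trans _ hx).
have ex1 : x ^+ k.+1 = x * u by rewrite exprS.
have ex2 : x ^+ k.+2 = x ^+ 2 * u by rewrite /u -exprD.
have ex3 : x ^+ m.+1 = x * w by rewrite exprS.
have ex4 : x ^+ m.+2 = x ^+ 2 * w by rewrite /w -exprD.
rewrite ex1 ex2 ex3 ex4 -/u.
have hxu : 2 <= x * u by nra.
have hx2u : 4 <= x ^+ 2 * u by nra.
have hw1 : 1 <= w by rewrite /w exprn_ege1 // (le_trans _ hx).
have hx2 : 4 <= x ^+ 2 by rewrite expr2; nra.
have hx2w : 4 <= x ^+ 2 * w by nra.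
have d1 : x * u - 1 != 0 by apply/eqP; lra.
have d2 : x ^+ 2 * u - 1 != 0 by apply/eqP; lra.
have d3 : x ^+ 2 * w - 1 != 0 by apply/eqP; lra.
rewrite -subr_ge0.
have -> : (G * ((x * w - 1) / (x * u - 1)) - G) ^+ 2 -
  G * (1 - (u - 1) / (x ^+ 2 * w - 1)) *
  (G * ((x * w - 1) / (x * u - 1)) * ((w - 1) / (x ^+ 2 * u - 1)) -
   G * ((x * w - 1) / (x * u - 1)))
  = G ^+ 2 * ((x^+2*(w-u)^+2*(x^+2*w-1)*(x^+2*u-1) - (x^+2*w-u)*(x*w-1)*(w-x^+2*u)*(x*u-1))
     / ((x ^+ 2 * w - 1) * (x * u - 1) ^+ 2 * (x ^+ 2 * u - 1))).
  by field; rewrite d1 d2 d3.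
apply: mulr_ge0; first exact: sqr_ge0.
apply: divr_ge0; first exact: core.
apply: mulr_ge0; last by rewrite subr_ge0; lra.
apply: mulr_ge0; last exact: sqr_ge0.
by rewrite subr_ge0; lra.
Qed.
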